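(* Let $m$ be a positive integer, $n=2^m$, and let the dihedral group $D_n=\langle r,f\mid r^n=f^2=1,\ frf=r^{-1}\rangle$ act on $\{0,\dots,n-1\}$ by $r\cdot i=i+1 \bmod n$ and $f\cdot i=-i \bmod n$ (the symmetries of the vertices of a regular $n$-gon). Let $W:D_n\to U(\mathbb{C}^{2^m}\otimes\mathbb{C}^2)$ be the unitary representation $W(\sigma)\lvert i\rangle\otimes\lvert\alpha\rangle=\lvert\sigma\cdot i\rangle\otimes\lvert\alpha\rangle$ for $i\in\{0,\dots,n-1\}$, $\alpha\in\{0,1\}$. Let $D=\mathrm{diag}(e^{i\theta_0},\dots,e^{i\theta_{2^m-1}})$ acting on $\mathbb{C}^{2^m}$, with pairwise distinct phases $e^{i\theta_j}$. Let $\mathcal{Q}$ be the subgroup of $U(\mathbb{C}^{2^m}\otimes\mathbb{C}^2)$ generated by $\pm iI$, $I\otimes X$, $I\otimes Z$, $W(D_n)$ and $D\otimes I$, where $X,Z$ are the Pauli matrices on $\mathbb{C}^2$. Then every element of $U(\mathbb{C}^{2^m}\otimes\mathbb{C}^2)$ can be written as a complex linear combination of elements of $\mathcal{Q}$. *)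

(* Defs.v *)
From HB Require Import structures.
From mathcomp Require Import all_boot all_order all_algebra.
From mathcomp Require Import complex mxtens.
From mathcomp Require Import reals.
Set Implicit Arguments. Unset Strict Implicit. Unset Printing Implicit Defensive.
Import Order.TTheory GRing.Theory Num.Theory.
Local Open Scope ring_scope.
Local Open Scope complex_scope.

Section Defs.
Variable R : realType.
Local Notation C := R[i].

Definition adjmx {n} (M : 'M[C]_n) : 'M[C]_n := (map_mx Num.conj M)^T.
Definition unitary {n} (M : 'M[C]_n) : Prop := M *m adjmx M = 1%:M.

Definition pauliX : 'M[C]_2 := \matrix_(a < 2, b < 2) ((a != b)%:R).
Definition pauliZ : 'M[C]_2 :=
  \matrix_(a < 2, b < 2) (if a == b then (if val a == 0%N then 1 else -1) else 0).

(* dihedral action on {0,...,n-1}: the element r^k f^b sends i to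
   k + (-1)^b i mod n *)
Lemma dih_proof n (i : 'I_n) (x : nat) : (x %% n < n)%N.
Proof. by rewrite ltn_pmod // (leq_ltn_trans (leq0n i) (ltn_ord i)). Qed.
Definition dih_act n (k : 'I_n) (b : bool) (i : 'I_n) : 'I_n :=
  Ordinal (@dih_proof n i (k + (if b then n - i else i))%N).

Definition permat n (sigma : 'I_n -> 'I_n) : 'M[C]_n :=
  \matrix_(a, b) ((a == sigma b)%:R).

Definition Wrep n (k : 'I_n) (b : bool) : 'M[C]_(n * 2) :=
  permat (dih_act k b) *t (1%:M : 'M[C]_2).

Definition Qgens m (d : 'I_(2 ^ m) -> C) (M : 'M[C]_(2 ^ m * 2)) : Prop :=
  M = 'i%:M \/ M = - 'i%:M \/
  M = (1%:M : 'M[C]_(2 ^ m)) *t pauliX \/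
  M = (1%:M : 'M[C]_(2 ^ m)) *t pauliZ \/
  (exists (k : 'I_(2 ^ m)) (b : bool), M = Wrep k b) \/
  M = diag_mx (\row_j d j) *t (1%:M : 'M[C]_2).

Inductive gen_group {N} (S : 'M[C]_N -> Prop) : 'M[C]_N -> Prop :=
| gen_base M : S M -> gen_group S M
| gen_one : gen_group S 1%:M
| gen_mul M1 M2 : gen_group S M1 -> gen_group S M2 -> gen_group S (M1 *m M2)
| gen_inv M : gen_group S M -> gen_group S (invmx M).

Definition in_lin_span {N} (S : 'M[C]_N -> Prop) (M : 'M[C]_N) : Prop :=
  exists (k : nat) (c : 'I_k -> C) (A : 'I_k -> 'M[C]_N),
    (forall j, S (A j)) /\ M = \sum_(j < k) c j *: A j.

End Defs.

(* Main.v *)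
Require Import Defs.
From HB Require Import structures.
From mathcomp Require Import all_boot all_order all_algebra.
From mathcomp Require Import complex mxtens.
From mathcomp Require Import reals.
Import Order.TTheory GRing.Theory Num.Theory.
Local Open Scope ring_scope.
Local Open Scope complex_scope.

Section Span.
Variable R : realType.
Local Notation C := R[i].
Variable N : nat.
Variable S : 'M[C]_N -> Prop.
Local Notation L := (in_lin_span (gen_group S)).

Lemma L0 : L 0.
Proof.
exists 0%N, (fun _ => 0), (fun _ => 1%:M); split; first by case.
by rewrite big_ord0.
Qed.

Lemma L1 M : gen_group S M -> L M.
Proof.
move=> HM; exists 1%N, (fun _ => 1), (fun _ => M); split=> //.
by rewrite big_ord1 scale1r.
Qed.

Lemma LD A B : L A -> L B -> L (A + B).
Proof.
move=> [k1 [c1 [A1 [HA1 ->]]]] [k2 [c2 [A2 [HA2 ->]]]].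
exists (k1 + k2)%N, (fun j => match split j with inl a => c1 a | inr b => c2 b end),
  (fun j => match split j with inl a => A1 a | inr b => A2 b end); split.
  by move=> j; case: (split j).
rewrite big_split_ord /=; congr (_ + _); apply: eq_bigr => j _.
  by rewrite (unsplitK (inl _ j)).
by rewrite (unsplitK (inr _ j)).
Qed.

Lemma LZ a A : L A -> L (a *: A).
Proof.
move=> [k [c [A1 [HA ->]]]]; exists k, (fun j => a * c j), A1; split=> //.
by rewrite scaler_sumr; apply: eq_bigr => j _; rewrite scalerA.
Qed.

Lemma Lsum (I : Type) (r : seq I) (P : pred I) (F : I -> 'M[C]_N) :
  (forall i, P i -> L (F i)) -> L (\sum_(i <- r | P i) F i).
Proof.
move=> H; apply: (big_ind L); [exact: L0 | exact: LD | exact: H].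
Qed.

Lemma LM A B : L A -> L B -> L (A *m B).
Proof.
move=> [k1 [c1 [A1 [HA1 ->]]]] [k2 [c2 [A2 [HA2 ->]]]].
rewrite mulmx_suml; apply: Lsum => j _; rewrite -scalemxAl; apply: LZ.
rewrite mulmx_sumr; apply: Lsum => l _; rewrite -scalemxAr; apply: LZ.
by apply: L1; apply: gen_mul.
Qed.

End Span.

Section Tens.
Variable R : realType.
Local Notation C := R[i].

Lemma tensmxDl m n p q (A B : 'M[C]_(m,n)) (M : 'M[C]_(p,q)) :
  (A + B) *t M = A *t M + B *t M.
Proof. by apply/matrixP=> i j; rewrite !mxE mulrDl. Qed.
Lemma tensmxZl m n p q a (A : 'M[C]_(m,n)) (M : 'M[C]_(p,q)) :
  (a *: A) *t M = a *: (A *t M).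
Proof. by apply/matrixP=> i j; rewrite !mxE mulrA. Qed.
Lemma tensmxDr m n p q (A B : 'M[C]_(m,n)) (M : 'M[C]_(p,q)) :
  M *t (A + B) = M *t A + M *t B.
Proof. by apply/matrixP=> i j; rewrite !mxE mulrDr. Qed.
Lemma tensmxZr m n p q a (A : 'M[C]_(m,n)) (M : 'M[C]_(p,q)) :
  M *t (a *: A) = a *: (M *t A).
Proof. by apply/matrixP=> i j; rewrite !mxE mulrCA. Qed.

Lemma idx_eq m n (i i' : 'I_m) (a a' : 'I_n) :
  (mxtens_index (i, a) == mxtens_index (i', a')) = (i == i') && (a == a').
Proof. by rewrite (can_eq (@mxtens_indexK m n)) xpair_eqE. Qed.

Lemma tens_delta m n p q (i : 'I_m) (j : 'I_n) (a : 'I_p) (b : 'I_q) :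
  (delta_mx i j : 'M[C]_(m,n)) *t (delta_mx a b : 'M[C]_(p,q))
  = delta_mx (mxtens_index (i,a)) (mxtens_index (j,b)).
Proof.
apply/matrixP=> x y; case: (mxtens_indexP x) => i' a'; case: (mxtens_indexP y) => j' b'.
rewrite tensmxE !mxE !idx_eq -natrM mulnb.
by rewrite [i' == i]eq_sym [a' == a]eq_sym [j' == j]eq_sym [b' == b]eq_sym
  -!andbA; congr ((nat_of_bool _)%:R); rewrite (andbCA (j == j')).
Qed.

Lemma tens11 m n : (1%:M : 'M[C]_m) *t (1%:M : 'M[C]_n) = 1%:M.
Proof.
apply/matrixP=> x y; case: (mxtens_indexP x) => i' a'; case: (mxtens_indexP y) => j' b'.
by rewrite tensmxE !mxE idx_eq -natrM mulnb.
Qed.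
End Tens.

Section Main.
Variable R : realType.
Local Notation C := R[i].
Variable m : nat.
Local Notation n := (2 ^ m)%N.
Variable d : 'I_n -> C.
Hypothesis hdist : injective d.
Local Notation L := (in_lin_span (gen_group (@Qgens R m d))).
Definition LT1 (A : 'M[C]_n) := L (A *t (1%:M : 'M[C]_2)).

Lemma LT1D A B : LT1 A -> LT1 B -> LT1 (A + B).
Proof. by rewrite /LT1 tensmxDl; apply: LD. Qed.
Lemma LT1Z a A : LT1 A -> LT1 (a *: A).
Proof. by rewrite /LT1 tensmxZl; apply: LZ. Qed.
Lemma LT1M A B : LT1 A -> LT1 B -> LT1 (A *m B).
Proof.
rewrite /LT1; have -> : (A *m B) *t (1%:M : 'M[C]_2) = (A *t 1%:M) *m (B *t 1%:M).
  by rewrite tensmx_mul mulmx1.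
exact: LM.
Qed.
Lemma LT10 : LT1 0.
Proof. by rewrite /LT1 tens0mx; apply: L0. Qed.
Lemma LT1sum (I : Type) (r : seq I) (P : pred I) (F : I -> 'M[C]_n) :
  (forall i, P i -> LT1 (F i)) -> LT1 (\sum_(i <- r | P i) F i).
Proof. move=> H; apply: (big_ind LT1); [exact: LT10 | exact: LT1D | exact: H]. Qed.
Lemma LT11 : LT1 1%:M.
Proof. by rewrite /LT1 tens11; apply: L1; apply: gen_one. Qed.
Lemma LT1B A B : LT1 A -> LT1 B -> LT1 (A - B).
Proof. by move=> HA HB; apply: LT1D => //; rewrite -scaleN1r; apply: LT1Z. Qed.

Definition Dm : 'M[C]_n := diag_mx (\row_j d j).
Lemma LT1D0 : LT1 Dm.
Proof. by apply: L1; apply: gen_base; do 5 right. Qed.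
Lemma LT1P k : LT1 (permat R (dih_act k false)).
Proof. by apply: L1; apply: gen_base; do 4 right; left; exists k, false. Qed.

Lemma diag_prod (s : seq 'I_n) :
  LT1 (diag_mx (\row_i \prod_(l <- s) (d i - d l))).
Proof.
elim: s => [|l s IH].
  have -> : diag_mx (\row_i \prod_(l <- [::]) (d i - d l)) = 1%:M :> 'M[C]_n.
    by apply/matrixP=> a b; rewrite !mxE big_nil.
  exact: LT11.
have -> : diag_mx (\row_i \prod_(l0 <- l :: s) (d i - d l0)) =
   (Dm - d l *: 1%:M) *m diag_mx (\row_i \prod_(l <- s) (d i - d l)).
  have -> : Dm - d l *: 1%:M = diag_mx (\row_i (d i - d l)).
    apply/matrixP=> a b; rewrite !mxE; case: (a == b); by rewrite /= ?mulr1n ?mulr0n ?mulr1 ?mulr0 ?subr0 ?subrr.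
  rewrite (mul_diag_mx (\row_i (d i - d l))); apply/matrixP=> a b; rewrite !mxE big_cons mulrnAr.
  done.
apply: LT1M => //; apply: LT1B; first exact: LT1D0.
by apply: LT1Z; exact: LT11.
Qed.


Lemma LT1delta_diag (j : 'I_n) : LT1 (delta_mx j j).
Proof.
have H := diag_prod [seq l <- index_enum 'I_n | l != j].
rewrite (_ : delta_mx j j = (\prod_(l | l != j) (d j - d l))^-1 *:
   diag_mx (\row_i \prod_(l <- [seq l <- index_enum 'I_n | l != j]) (d i - d l))).
  exact: LT1Z.
have nz : \prod_(l | l != j) (d j - d l) != 0.
  apply/prodf_neq0 => l lj; rewrite subr_eq0; apply/negP => /eqP /hdist ljE.
  by rewrite ljE eqxx in lj.
apply/matrixP=> a b; rewrite !mxE big_filter.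
case: (eqVneq a b) => [<-|ab]; last first.
  rewrite mulr0n mulr0; case: (eqVneq a j) => [aj|_] //.
  case: (eqVneq b j) => [bj|_]; last by rewrite andbF.
  by move: ab; rewrite aj bj eqxx.
rewrite mulr1n andbb; case: (eqVneq a j) => [->|aj].
  by rewrite mulVf.
by rewrite [X in _ * X](bigD1 a) //= subrr mul0r mulr0.
Qed.

Lemma dih_val (k b : 'I_n) : val (dih_act k false b) = ((k + b) %% n)%N.
Proof. by []. Qed.

Lemma dih_inj (k : 'I_n) : injective (dih_act k false).
Proof.
move=> b c /(congr1 val); rewrite !dih_val => /eqP; rewrite eqn_modDl.
by rewrite !modn_small // => /eqP /val_inj.
Qed.

Lemma dih_hit (i j : 'I_n) : exists k : 'I_n, dih_act k false j = i.
Proof.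
have hn : (0 < n)%N by rewrite expn_gt0.
have kP : ((i + (n - j)) %% n < n)%N by rewrite ltn_mod.
exists (Ordinal kP); apply: val_inj; rewrite dih_val /= modnDml -addnA subnK.
  by rewrite modnDr modn_small.
exact: ltnW.
Qed.

Lemma LT1delta (i j : 'I_n) : LT1 (delta_mx i j).
Proof.
have [k hk] := dih_hit i j.
rewrite (_ : delta_mx i j = delta_mx i i *m permat R (dih_act k false)).
  apply: LT1M; [exact: LT1delta_diag | exact: LT1P].
apply/matrixP=> a b; rewrite !mxE (bigD1 i) //= big1.
  rewrite !mxE eqxx andbT addr0 -natrM mulnb; congr ((nat_of_bool _)%:R); congr (_ && _).
  by rewrite -hk (inj_eq (@dih_inj k)) eq_sym.
by move=> c /negbTE ci; rewrite !mxE ci andbF mul0r.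
Qed.

Lemma LT1all (A : 'M[C]_n) : LT1 A.
Proof.
rewrite (matrix_sum_delta A); apply: LT1sum => i _; apply: LT1sum => j _.
apply: LT1Z; exact: LT1delta.
Qed.


Definition LT2 (B : 'M[C]_2) := L ((1%:M : 'M[C]_n) *t B).
Lemma LT2D A B : LT2 A -> LT2 B -> LT2 (A + B).
Proof. by rewrite /LT2 tensmxDr; apply: LD. Qed.
Lemma LT2Z a A : LT2 A -> LT2 (a *: A).
Proof. by rewrite /LT2 tensmxZr; apply: LZ. Qed.
Lemma LT2M A B : LT2 A -> LT2 B -> LT2 (A *m B).
Proof.
rewrite /LT2; have -> : (1%:M : 'M[C]_n) *t (A *m B) = (1%:M *t A) *m (1%:M *t B).
  by rewrite tensmx_mul mulmx1.
exact: LM.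
Qed.
Lemma LT21 : LT2 1%:M.
Proof. by rewrite /LT2 tens11; apply: L1; apply: gen_one. Qed.
Lemma LT2X : LT2 (pauliX R).
Proof. by apply: L1; apply: gen_base; right; right; left. Qed.
Lemma LT2Zp : LT2 (pauliZ R).
Proof. by apply: L1; apply: gen_base; do 3 right; left. Qed.

Lemma two_nz : (2 : C) != 0.
Proof. by rewrite pnatr_eq0. Qed.

Lemma LT2delta (a b : 'I_2) : LT2 (delta_mx a b).
Proof.
have E00 : (delta_mx ord0 ord0 : 'M[C]_2) = 2^-1 *: (1%:M + pauliZ R).
  apply/matrixP=> x y; rewrite !mxE.
  case: x => [[|[|x]] Hx] //; case: y => [[|[|y]] Hy] //=; rewrite ?mulr0n ?mulr1n ?addr0 ?add0r ?subrr ?mulr0 //.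
  by rewrite -mulr2n; apply/esym; apply: mulVf; exact: two_nz.
have E11 : (delta_mx ord_max ord_max : 'M[C]_2) = 2^-1 *: (1%:M - pauliZ R).
  apply/matrixP=> x y; rewrite !mxE.
  case: x => [[|[|x]] Hx] //; case: y => [[|[|y]] Hy] //=; rewrite ?mulr0n ?mulr1n ?addr0 ?add0r ?subrr ?oppr0 ?mulr0 ?opprK ?subr0 //.
  by rewrite -mulr2n; apply/esym; apply: mulVf; exact: two_nz.
have L00 : LT2 (delta_mx ord0 ord0).
  by rewrite E00; apply: LT2Z; apply: LT2D; [exact: LT21 | exact: LT2Zp].
have L11 : LT2 (delta_mx ord_max ord_max).
  rewrite E11; apply: LT2Z; apply: LT2D; first exact: LT21.
  by rewrite -scaleN1r; apply: LT2Z; exact: LT2Zp.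
have EX0 : (delta_mx ord0 ord0 : 'M[C]_2) *m pauliX R = delta_mx ord0 ord_max.
  apply/matrixP=> x y; rewrite !mxE !big_ord_recl big_ord0 !mxE.
  case: x => [[|[|x]] Hx] //; case: y => [[|[|y]] Hy] //;
     rewrite /= ?mulr0 ?mul0r ?mulr1 ?addr0 ?add0r //.
have EX1 : (delta_mx ord_max ord_max : 'M[C]_2) *m pauliX R = delta_mx ord_max ord0.
  apply/matrixP=> x y; rewrite !mxE !big_ord_recl big_ord0 !mxE.
  case: x => [[|[|x]] Hx] //; case: y => [[|[|y]] Hy] //;
     rewrite /= ?mulr0 ?mul0r ?mulr1 ?addr0 ?add0r //.
have -> : a = (if val a == 0%N then ord0 else ord_max).
  by apply: val_inj; case: a => [[|[|a]] Ha].
have -> : b = (if val b == 0%N then ord0 else ord_max).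
  by apply: val_inj; case: b => [[|[|b]] Hb].
case: (val a == 0%N); case: (val b == 0%N).
- exact: L00.
- by rewrite -EX0; apply: LT2M => //; exact: LT2X.
- by rewrite -EX1; apply: LT2M => //; exact: LT2X.
- exact: L11.
Qed.

Lemma Lall (M : 'M[C]_(n * 2)) : L M.
Proof.
rewrite (matrix_sum_delta M); apply: Lsum => p _; apply: Lsum => q _; apply: LZ.
case: (mxtens_indexP p) => i a; case: (mxtens_indexP q) => j b.
rewrite -tens_delta tensmx_decr; apply: LM; [exact: LT1delta | exact: LT2delta].
Qed.

End Main.

Theorem proposition4 (R : realType) (m : nat) (hm : (0 < m)%N)
  (d : 'I_(2 ^ m) -> R[i])
  (hd : forall j, `|d j| = 1)
  (hdist : injective d)
  (U : 'M[R[i]]_(2 ^ m * 2)) (hU : unitary U) :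
  in_lin_span (gen_group (@Qgens R m d)) U.
Proof. exact: (@Lall R m d hdist U). Qed.
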